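(* Let $\lvert\psi\rangle$ be an $n$-qubit state. Suppose the fidelity $\lvert\langle\psi|\phi\rangle\rvert^2$ is maximized by $\lvert\phi\rangle = \lvert0^n\rangle$ over stabilizer states $\lvert\phi\rangle$. Let $S^* = 0^n \times \mathbb F_2^n = \mathrm{Weyl}(\lvert0^n\rangle)$, and let $T = 0^{n + 1} \times \mathbb F_2^{n - 1}$ be a maximal subspace of $S^*$. Then \[\sum_{x \in S^* \setminus T} c_\psi(x) \geq 2^{\frac{n}{2}-1} \left(\sqrt{3}-1\right) F_\mathcal{S}(\lvert\psi\rangle).\]
   Context: For $x=(a,b)\in\mathbb F_2^{2n}$ the Weyl operator is $W_x = i^{a\cdot b}X^{a_1}Z^{b_1}\otimes\cdots\otimes X^{a_n}Z^{b_n}$; $c_\psi(x)=2^{-n/2}\langle\psi|W_x|\psi\rangle$ (the coefficients in the Weyl expansion $\lvert\psi\rangle\langle\psi\rvert=2^{-n/2}\sum_x c_\psi(x)W_x$); $\mathrm{Weyl}(\lvert\phi\rangle)=\{x: W_x\lvert\phi\rangle=\pm\lvert\phi\rangle\}$; $F_\mathcal{S}(\lvert\psi\rangle)=\max_{\lvert\phi\rangle\text{ stabilizer}}\lvert\langle\phi|\psi\rangle\rvert^2$. *)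

(* Defs.v *)
From HB Require Import structures.
From mathcomp Require Import all_boot all_order all_algebra.
From mathcomp Require Import reals.
From mathcomp Require Import complex.
Set Implicit Arguments. Unset Strict Implicit. Unset Printing Implicit Defensive.
Import Order.TTheory GRing.Theory Num.Theory.
Local Open Scope ring_scope.

Section Weyl.
Variables (R : realType) (n : nat).
Local Notation C := (R[i]).

Definition bits := {ffun 'I_n -> bool}.
(* an n-qubit vector, given by its amplitudes in the computational basis *)
Definition qvec := bits -> C.

Definition bxor (u v : bits) : bits := [ffun j => u j (+) v j].
Definition bzero : bits := [ffun _ => false].

(* single-qubit Pauli matrix entries <v|X^a|u>, <v|Z^b|u>, and <v|X^a Z^b|u> *)
Definition Xent (a v u : bool) : C := if v == (u (+) a) then 1 else 0.
Definition Zent (b v u : bool) : C := if v == u then (-1) ^+ (b && u) else 0.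
Definition XZent (a b v u : bool) : C := \sum_(w : bool) Xent a v w * Zent b w u.

(* a . b computed over the integers *)
Definition bdot (a b : bits) : nat := #|[set j | a j && b j]|.

(* Weyl operator W_x = i^{a.b} X^{a_1}Z^{b_1} (x) ... (x) X^{a_n}Z^{b_n}, x = (a,b):
   matrix entry <v|W_x|u> (tensor-product entries are products of the factors' entries) *)
Definition Went (x : bits * bits) (v u : bits) : C :=
  (Complex 0 1) ^+ (bdot x.1 x.2) * \prod_(j : 'I_n) XZent (x.1 j) (x.2 j) (v j) (u j).

Definition Wapp (x : bits * bits) (phi : qvec) : qvec :=
  fun v => \sum_(u : bits) Went x v u * phi u.

Definition inner (phi psi : qvec) : C := \sum_(u : bits) conjc (phi u) * psi u.

Definition is_state (phi : qvec) : Prop := inner phi phi = 1.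

Definition cpsi (psi : qvec) (x : bits * bits) : C :=
  real_complex R ((Num.sqrt (2 : R)) ^+ n)^-1 * inner psi (Wapp x psi).

Definition Weyl (phi : qvec) : {set bits * bits} :=
  [set x | [forall v, Wapp x phi v == phi v] || [forall v, Wapp x phi v == - phi v]].

(* stabilizer states: states stabilized (up to sign) by 2^n Weyl operators,
   i.e. |Weyl(phi)| = 2^n (maximal stabilizer group) *)
Definition stabilizer (phi : qvec) : Prop := is_state phi /\ #|Weyl phi| = (2 ^ n)%N.

Definition fid (phi psi : qvec) : R :=
  let: Complex a b := inner phi psi in a ^+ 2 + b ^+ 2.

(* stabilizer fidelity F_S(psi) = max (= sup) over stabilizer states *)
Definition FS (psi : qvec) : R :=
  sup (fun r : R => exists phi, stabilizer phi /\ r = fid phi psi).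

Definition ket0 : qvec := fun u => if u == bzero then 1 else 0.

(* S* = 0^n x F_2^n and T = 0^{n+1} x F_2^{n-1} *)
Definition Sstar : {set bits * bits} := [set x : bits * bits | x.1 == bzero].
Definition Tsub : {set bits * bits} :=
  [set x : bits * bits | (x.1 == bzero) && [forall j : 'I_n, (val j == 0%N) ==> ~~ x.2 j]].

End Weyl.

(* Main.v *)
Require Import Defs.
From HB Require Import structures.
From mathcomp Require Import all_boot all_order all_algebra.
From mathcomp Require Import reals.
From mathcomp Require Import complex.
From mathcomp Require Import ring lra.
Set Implicit Arguments. Unset Strict Implicit. Unset Printing Implicit Defensive.
Import Order.TTheory GRing.Theory Num.Theory.
Local Open Scope ring_scope.

Section S.
Variables (R : realType) (m : nat).
Local Notation n := m.+1.
Local Notation C := (R[i]).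
Local Notation bits := (bits n).

Lemma prod_ifG (I : finType) (c : I -> bool) (s : I -> C) :
  \prod_j (if c j then s j else 0) = if [forall j, c j] then \prod_j s j else 0.
Proof.
case: forallP => [H|/forallP]; first by apply: eq_bigr => j _; rewrite H.
rewrite negb_forall => /existsP [j /negbTE Hj].
by rewrite (bigD1 j) //= Hj mul0r.
Qed.

Lemma prod_signG (I : finType) (P : I -> bool) :
  \prod_j ((-1 : C) ^+ (P j)) = (-1) ^+ #|[set j | P j]|.
Proof.
rewrite -prodr_const [RHS]big_mkcond /=; apply: eq_bigr => j _.
by rewrite inE; case: (P j); rewrite ?expr1 ?expr0.
Qed.


Lemma XZentE (a b v u : bool) :
  XZent R a b v u = if v == u (+) a then (-1) ^+ (b && u) else 0.
Proof.
rewrite /XZent big_bool /Xent /Zent.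
by case: a; case: b; case: v; case: u; rewrite /= ?mul1r ?mul0r ?addr0 ?add0r ?expr1 ?expr0.
Qed.

Lemma WentE (x : bits * bits) (v u : bits) : Went R x v u =
  'i ^+ bdot x.1 x.2 * (if v == bxor u x.1 then (-1) ^+ bdot x.2 u else 0).
Proof.
rewrite /Went; congr (_ * _).
under eq_bigr do rewrite XZentE.
rewrite prod_ifG prod_signG.
have -> : [forall j, v j == u j (+) x.1 j] = (v == bxor u x.1).
  apply/forallP/eqP => [H|->] ; last by move=> j; rewrite ffunE.
  by apply/ffunP => j; rewrite ffunE; apply/eqP.
by [].
Qed.

Lemma charsum (u : bits) : \sum_(b : bits | b ord0) (-1 : C) ^+ bdot b u
 = (-1) ^+ u ord0 * (if [forall i : 'I_m, ~~ u (lift ord0 i)] then 2 ^+ m else 0).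
Proof.
pose F (j : 'I_n) (c : bool) : C := (if (j == ord0) ==> c then 1 else 0) * (-1) ^+ (c && u j).
have E : forall b : bits, (if b ord0 then (-1) ^+ bdot b u else 0) = \prod_j F j (b j).
  move=> b; rewrite big_split /= /bdot -prod_signG.
  have -> : \prod_i (if (i == ord0) ==> b i then 1 else 0 : C) = if b ord0 then 1 else 0.
    by rewrite (bigD1 ord0) //= big1 ?mulr1 // => j /negbTE ->.
  by case: (b ord0); rewrite ?mul1r ?mul0r.
rewrite big_mkcond /=; under eq_bigr do rewrite E.
rewrite -bigA_distr_bigA big_ord_recl /= big_bool /F /= !mul1r mul0r addr0.
congr (_ * _).
under eq_bigr => i _ do rewrite big_bool /= !mul1r expr0.
have -> : (2:C) ^+ m = \prod_(i < m) 2 by rewrite prodr_const card_ord.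
rewrite -prod_ifG; apply: eq_bigr => i _.
case: (u (lift ord0 i)); rewrite /= ?expr1 ?expr0 ?subrr ?addNr //.

Qed.


Definition e0 : bits := [ffun j : 'I_n => j == ord0].

Lemma e0_neq0 : (e0 == bzero n) = false.
Proof. by apply/negbTE/eqP => /ffunP /(_ ord0); rewrite !ffunE. Qed.

Lemma bits_cases (u : bits) : [forall i : 'I_m, ~~ u (lift ord0 i)] -> u = bzero n \/ u = e0.
Proof.
move/forallP=> H; case E: (u ord0); [right|left]; apply/ffunP => j; rewrite !ffunE;
  case: (unliftP ord0 j) => [j' ->|->] //; rewrite ?eqxx ?(negbTE (H j')) //.
Qed.

Lemma bdot0l (b : bits) : bdot (bzero n) b = 0%N.
Proof.
rewrite /bdot; apply/eqP; rewrite cards_eq0; apply/eqP/setP => j.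
by rewrite !inE ffunE.
Qed.

Lemma bxor0 (u : bits) : bxor u (bzero n) = u.
Proof. by apply/ffunP => j; rewrite !ffunE addbF. Qed.

Lemma WappD (b : bits) (psi : qvec R n) v :
  Wapp (bzero n, b) psi v = (-1) ^+ bdot b v * psi v.
Proof.
rewrite /Wapp (bigD1 v) //= big1 ?addr0.
  by rewrite WentE /= bdot0l bxor0 eqxx expr0 mul1r.
by move=> u Hu; rewrite WentE /= bxor0 eq_sym (negbTE Hu) mulr0 mul0r.
Qed.

Lemma innerD (b : bits) (psi : qvec R n) :
  inner psi (Wapp (bzero n, b) psi) = \sum_u conjc (psi u) * ((-1) ^+ bdot b u * psi u).
Proof. by rewrite /inner; apply: eq_bigr => u _; rewrite WappD. Qed.

Lemma memSD (x : bits * bits) :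
  (x \in Sstar n :\: Tsub n) = (x.1 == bzero n) && x.2 ord0.
Proof.
rewrite !inE; case: (x.1 == bzero n) => //=; rewrite andbT negb_forall.
apply/existsP/idP => [[j]|H]; last by exists ord0; rewrite /= H.
rewrite negb_imply negbK => /andP [/eqP Hj H].
by have -> : ord0 = j by apply: val_inj.
Qed.

Lemma sum_main (psi : qvec R n) :
  \sum_(x in Sstar n :\: Tsub n) cpsi psi x =
  real_complex R ((Num.sqrt (2 : R)) ^+ n)^-1 * 2 ^+ m *
   (conjc (psi (bzero n)) * psi (bzero n) - conjc (psi e0) * psi e0).
Proof.
transitivity (\sum_(a : bits) \sum_(b : bits | (a == bzero n) && b ord0) cpsi psi (a,b)).
  by rewrite pair_big_dep; apply: eq_bigl => [[a b]]; rewrite memSD.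
rewrite (bigD1 (bzero n)) //= [X in _ + X]big1 ?addr0 => [|a Ha]; last first.
  by rewrite big_pred0 // => b; rewrite (negbTE Ha).
rewrite /cpsi -mulr_sumr -mulrA; congr (_ * _).
under eq_bigr do rewrite innerD.
rewrite exchange_big /= eqxx.
have H u : \sum_(b : bits | true && b ord0) conjc (psi u) * ((-1) ^+ bdot b u * psi u) =
   conjc (psi u) * ((\sum_(b : bits | b ord0) (-1) ^+ bdot b u) * psi u).
  by rewrite big_distrl big_distrr.
under eq_bigr do rewrite H charsum.
rewrite (bigD1 (bzero n)) //= (bigD1 e0) ?e0_neq0 //= big1 ?addr0; last first.
  move=> u /andP [H1 H2]; case: ifP; last by rewrite !(mulr0, mul0r).
  by move/bits_cases => [] HH; rewrite HH eqxx ?andbF in H1 H2.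
have -> : [forall i : 'I_m, ~~ bzero n (lift ord0 i)] by apply/forallP => i; rewrite ffunE.
have -> : [forall i : 'I_m, ~~ e0 (lift ord0 i)].
  by apply/forallP => i; rewrite ffunE eq_sym (negbTE (neq_lift _ _)).
rewrite !ffunE eqxx /= expr0 expr1.
ring.
Qed.

Definition al : C := real_complex R (Num.sqrt (2 : R))^-1.
Definition om (s k : bool) : C := (-1) ^+ s * 'i ^+ k.
Definition phiS (s k : bool) : qvec R n :=
  fun u => if u == bzero n then al else if u == e0 then om s k * al else 0.

Lemma al_neq0 : al != 0.
Proof.
rewrite /al fmorph_eq0 invr_eq0 sqrtr_eq0 -ltNge.
by apply: ltr0Sn.
Qed.

Lemma om_neq0 s k : om s k != 0.
Proof.
have Hi : ('i : C) != 0 by rewrite eq_complex /= oner_eq0 andbF.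
by case: s; case: k; rewrite /om ?expr0 ?expr1 ?mul1r ?mulN1r ?oppr_eq0 ?oner_eq0.
Qed.

Lemma Wapp_phi s k x v : Wapp x (phiS s k) v =
  Went R x v (bzero n) * al + Went R x v e0 * (om s k * al).
Proof.
rewrite /Wapp (bigD1 (bzero n)) //= (bigD1 e0) ?e0_neq0 //= big1 ?addr0.
  by rewrite /phiS eqxx e0_neq0 eqxx.
by move=> u /andP [H1 H2]; rewrite /phiS (negbTE H1) (negbTE H2) mulr0.
Qed.

Lemma bxor0l (u : bits) : bxor (bzero n) u = u.
Proof. by apply/ffunP => j; rewrite !ffunE. Qed.

Lemma bdot0r (b : bits) : bdot b (bzero n) = 0%N.
Proof.
rewrite /bdot; apply/eqP; rewrite cards_eq0; apply/eqP/setP => j.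
by rewrite !inE ffunE andbF.
Qed.

Lemma bdote0r (b : bits) : bdot b e0 = b ord0.
Proof.
rewrite /bdot (_ : [set j | b j && e0 j] = if b ord0 then [set ord0] else set0).
  by case: (b ord0); rewrite ?cards1 ?cards0.
case Hb: (b ord0); apply/setP => j; rewrite !inE ffunE;
  case: (eqVneq j ord0) => [->|Hj]; rewrite ?Hb ?eqxx ?(negbTE Hj) ?andbF //.
Qed.

Lemma bdote0l (b : bits) : bdot e0 b = b ord0.
Proof.
by rewrite -bdote0r /bdot; apply: eq_card => j; rewrite !inE andbC.
Qed.

Lemma bxore0 (a : bits) : (bxor e0 a == bzero n) = (a == e0).
Proof.
apply/eqP/eqP => [/ffunP H|->]; last by apply/ffunP => j; rewrite !ffunE addbb.
apply/ffunP => j; have := H j; rewrite !ffunE; by case: (j == ord0); case: (a j).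
Qed.

Definition W0 (k : bool) : {set bits * bits} :=
  [set x : bits * bits | ((x.1 == bzero n) && ~~ x.2 ord0) || ((x.1 == e0) && (x.2 ord0 == k))].

Lemma ik2 (k : bool) : ('i : C) ^+ k * 'i ^+ k * (-1) ^+ k = 1.
Proof. by case: k; rewrite ?expr0 ?expr1 ?mulr1 // -expr2 sqr_i mulrNN mulr1. Qed.

Lemma W0_sub s k x : x \in W0 k -> forall v,
  Wapp x (phiS s k) v = (if x.1 == bzero n then 1 else (-1) ^+ s) * phiS s k v.
Proof.
rewrite inE => /orP [/andP [/eqP Ha Hb] | /andP [/eqP Ha /eqP Hb]] v;
  rewrite Wapp_phi !WentE Ha /= ?eqxx ?e0_neq0.
  rewrite bdot0l !bxor0 bdot0r bdote0r (negbTE Hb) /phiS.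
  case: (eqVneq v (bzero n)) => [->|H1]; first by rewrite eq_sym e0_neq0; ring.
  by case: (eqVneq v e0) => _; rewrite ?expr0 /=; ring.
rewrite bdote0l bxor0l bdot0r bdote0r Hb /phiS.
have -> : bxor e0 e0 = bzero n by apply/eqP; rewrite bxore0.
case: (eqVneq v (bzero n)) => [->|H1].
  rewrite eq_sym e0_neq0 /om.
  have := ik2 k; move: ('i ^+ k) ((-1 : C) ^+ k) ((-1 : C) ^+ s) => a b c Hab.
  transitivity ((a * a * b) * (c * al)); first by ring.
  by rewrite Hab mul1r.
have Hs : (-1 : C) ^+ s * (-1) ^+ s = 1 by rewrite -exprMn mulrNN mulr1 expr1n.
case: (v == e0); rewrite /om ?expr0; last by ring.
move: Hs; move: ('i ^+ k) ((-1 : C) ^+ s) => a c Hc.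
by rewrite mulr1 mulr0 mul0r addr0 !mulrA Hc mul1r.
Qed.
Lemma Hm1 : (-1 : C) != 1.
Proof. by rewrite eq_sym -subr_eq0 opprK -(natrD _ 1 1) pnatr_eq0. Qed.

Lemma isq (b : bool) : ('i : C) ^+ b * 'i ^+ b = (-1) ^+ b.
Proof. by case: b; rewrite ?expr0 ?expr1 ?mulr1 // -expr2 sqr_i. Qed.

Lemma sgn_inj (b c : bool) : (-1 : C) ^+ b = (-1) ^+ c -> b = c.
Proof.
by case: b; case: c; rewrite ?expr0 ?expr1 // => /eqP; rewrite ?(negbTE Hm1) // eq_sym (negbTE Hm1).
Qed.

Lemma Weyl_sub s k x (sg : C) : sg * sg = 1 ->
  (forall v, Wapp x (phiS s k) v = sg * phiS s k v) -> x \in W0 k.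
Proof.
move=> Hsg H; rewrite inE.
have Hal := al_neq0; have Hom := om_neq0 s k.
case: (eqVneq x.1 (bzero n)) => Ha.
  have H0 := H (bzero n); have H1 := H e0.
  rewrite Wapp_phi !WentE Ha /= bdot0l !bxor0 /phiS !eqxx in H0.
  rewrite Wapp_phi !WentE Ha /= bdot0l !bxor0 /phiS !eqxx in H1.
  rewrite bdot0r bdote0r [bzero n == e0]eq_sym e0_neq0 !expr0 !mul1r mul0r addr0 in H0.
  rewrite bdote0r e0_neq0 expr0 !mul1r mul0r add0r in H1.
  have Hs1 : sg = 1 by apply: (mulIf Hal); rewrite mul1r -H0.
  rewrite Hs1 mul1r in H1.
  have : (-1 : C) ^+ x.2 ord0 = (-1) ^+ false.
    by apply: (mulIf (mulf_neq0 Hom Hal)); rewrite H1 expr0 mul1r.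
  by move/sgn_inj => ->.
case: (eqVneq x.1 e0) => He /=.
  have H1 := H e0.
  rewrite Wapp_phi !WentE He /= bdote0l bxor0l bdot0r /phiS !eqxx e0_neq0 in H1.
  have E2 : bxor e0 e0 = bzero n by apply/eqP; rewrite bxore0.
  rewrite E2 e0_neq0 expr0 mulr1 mulr0 mul0r addr0 mulrA in H1.
  have H2 := mulIf Hal H1.
  have Hs : (-1 : C) ^+ s * (-1) ^+ s = 1 by rewrite -exprMn mulrNN mulr1 expr1n.
  have : (-1 : C) ^+ x.2 ord0 = (-1) ^+ k.
    rewrite -!isq H2 /om.
    move: Hsg Hs; move: ('i ^+ k) ((-1 : C) ^+ s) => a c H3 H4.
    transitivity ((sg * sg) * (c * c) * (a * a)); first by ring.
    by rewrite H3 H4 !mul1r.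
  by move/sgn_inj => ->.
have H0 := H (bzero n).
rewrite Wapp_phi !WentE /= bxor0l /phiS !eqxx in H0.
rewrite eq_sym (negbTE Ha) eq_sym bxore0 (negbTE He) !mulr0 !mul0r addr0 in H0.
have Hs0 : sg = 0 by apply: (mulIf Hal); rewrite mul0r -H0.
by move: Hsg; rewrite Hs0 mulr0 => /eqP; rewrite eq_sym oner_eq0.
Qed.

Lemma Weyl_phi s k : Weyl (phiS s k) = W0 k.
Proof.
apply/setP => x; rewrite [in LHS]inE; apply/idP/idP.
  case/orP => /forallP H.
    by apply: (@Weyl_sub s k x 1 (mulr1 1)) => v; rewrite mul1r; apply/eqP.
  apply: (@Weyl_sub s k x (-1)); first by rewrite mulrNN mulr1.
  by move=> v; rewrite mulN1r; apply/eqP.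
move=> Hx; have H := W0_sub s Hx; apply/orP.
case: (x.1 == bzero n) in H.
  by left; apply/forallP => v; rewrite H mul1r.
case: s H => H; [right|left]; apply/forallP => v; rewrite H ?expr0 ?expr1 ?mulN1r ?mul1r //.
Qed.

Definition gW (k : bool) (c : bits) : bits * bits :=
  (if c ord0 then e0 else bzero n, [ffun j => if j == ord0 then k && c ord0 else c j]).

Lemma gW_inj k : injective (gW k).
Proof.
move=> c1 c2 [] H1 /ffunP H2; apply/ffunP => j.
case: (eqVneq j ord0) => [->|Hj]; last by have := H2 j; rewrite !ffunE (negbTE Hj).
move: H1; case: (c1 ord0); case: (c2 ord0) => // /eqP; by rewrite ?e0_neq0 // eq_sym e0_neq0.
Qed.

Lemma W0_img k : W0 k = gW k @: [set: bits].
Proof.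
apply/setP => x; apply/idP/imsetP => [|[c _ ->]]; last first.
  rewrite inE /gW /= ffunE eqxx; by case: (c ord0); rewrite ?e0_neq0 ?eqxx ?andbT ?andbF ?eqxx /=.
rewrite inE => /orP [/andP [/eqP Ha Hb] | /andP [/eqP Ha /eqP Hb]].
  exists [ffun j => if j == ord0 then false else x.2 j] => //.
  rewrite /gW !ffunE eqxx -Ha; case: x Ha Hb => a b /= _ Hb; congr (_, _).
  by apply/ffunP => j; rewrite !ffunE; case: (eqVneq j ord0) => [->|Hj]; rewrite ?andbF ?(negbTE Hb) ?(negbTE Hj).
exists [ffun j => if j == ord0 then true else x.2 j] => //.
rewrite /gW !ffunE eqxx -Ha; case: x Ha Hb => a b /= _ Hb; congr (_, _).
by apply/ffunP => j; rewrite !ffunE; case: (eqVneq j ord0) => [->|] //; rewrite Hb andbT.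
Qed.

Lemma card_W0 k : #|W0 k| = (2 ^ n)%N.
Proof. by rewrite W0_img card_imset ?cardsT ?card_ffun ?card_bool ?card_ord //; apply: gW_inj. Qed.

Lemma al2 : al * al = 2^-1.
Proof.
rewrite /al -rmorphM -invfM -expr2 sqr_sqrtr ?ler0n // fmorphV.
by rewrite (rmorph_nat (real_complex R) 2).
Qed.

Lemma conjc_al : conjc al = al.
Proof. exact: conjc_real. Qed.

Lemma conj_om s k : conjc (om s k) * om s k = 1.
Proof.
have Hi : conjc ('i : C) = - 'i by apply/eqP; rewrite eq_complex /= oppr0 !eqxx.
have Hmi : conjc (- 'i : C) = 'i by apply/eqP; rewrite eq_complex /= oppr0 opprK !eqxx.
have Hm1 : conjc (- 1 : C) = -1 by apply/eqP; rewrite eq_complex /= !oppr0 !eqxx.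
rewrite /om.
case: s; case: k; rewrite ?expr0 ?expr1 ?mul1r ?mulr1 ?mulN1r ?mulrN1 ?Hi ?Hmi ?Hm1 ?conjc1 ?mulr1 //.
- by rewrite mulrN -expr2 sqr_i opprK.
- by rewrite opprK.
- by rewrite mulNr -expr2 sqr_i opprK.
Qed.

Lemma inner_phiS s k (psi : qvec R n) :
  inner (phiS s k) psi = al * (psi (bzero n) + conjc (om s k) * psi e0).
Proof.
rewrite /inner (bigD1 (bzero n)) //= (bigD1 e0) ?e0_neq0 //= big1 ?addr0.
  rewrite /phiS eqxx e0_neq0 eqxx conjc_al.
  have -> : conjc (om s k * al) = conjc (om s k) * al by rewrite rmorphM; congr (_ * _); exact: conjc_real.
  ring.
by move=> u /andP [H1 H2]; rewrite /phiS (negbTE H1) (negbTE H2) rmorph0 mul0r.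
Qed.

Lemma stab_phiS s k : stabilizer (phiS s k).
Proof.
split; last by rewrite Weyl_phi card_W0.
rewrite /is_state inner_phiS /phiS eqxx e0_neq0 eqxx.
have -> : al * (al + conjc (om s k) * (om s k * al)) = (1 + conjc (om s k) * om s k) * (al * al) by ring.
rewrite conj_om al2 -(natrD _ 1 1) divff //.
by rewrite pnatr_eq0.
Qed.

Lemma fidE (phi psi : qvec R n) :
  fid phi psi = complex.Re (inner phi psi) ^+ 2 + complex.Im (inner phi psi) ^+ 2.
Proof. by rewrite /fid; case: (inner phi psi). Qed.

Lemma inner_ket0 (psi : qvec R n) : inner (@ket0 R n) psi = psi (bzero n).
Proof.
rewrite /inner (bigD1 (bzero n)) //= big1 ?addr0.
  by rewrite /ket0 eqxx conjc1 mul1r.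
by move=> u H1; rewrite /ket0 (negbTE H1) conjc0 mul0r.
Qed.

Lemma conj_om_ff : conjc (om false false) = Complex 1 0.
Proof. by rewrite /om !expr0 mulr1 conjc1. Qed.
Lemma conj_om_tf : conjc (om true false) = Complex (-1) 0.
Proof. by rewrite /om expr0 expr1 mulr1; apply/eqP; rewrite eq_complex /= !oppr0 !eqxx. Qed.
Lemma conj_om_ft : conjc (om false true) = Complex 0 (-1).
Proof. by rewrite /om expr0 expr1 mul1r. Qed.
Lemma conj_om_tt : conjc (om true true) = Complex 0 1.
Proof. by rewrite /om !expr1 mulN1r; apply/eqP; rewrite eq_complex /= !oppr0 opprK !eqxx. Qed.

End S.

Lemma key (R : realType) (p0 p1 X Y s : R) : 0 <= p1 -> 0 <= s -> s * s = 3 ->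
  X ^+ 2 + Y ^+ 2 = p0 * p1 -> p1 + 2 * X <= p0 -> p1 - 2 * X <= p0 ->
  p1 + 2 * Y <= p0 -> p1 - 2 * Y <= p0 -> p1 <= (2 - s) * p0.
Proof.
move=> h1 hs hs3 hXY i1 i2 i3 i4.
have hd : p1 <= p0 by lra.
have hX : 4 * X ^+ 2 <= (p0 - p1) ^+ 2 by nra.
have hY : 4 * Y ^+ 2 <= (p0 - p1) ^+ 2 by nra.
have hq : 0 <= (p1 - (2 - s) * p0) * (p1 - (2 + s) * p0) by nra.
have [hlt|hge] := ltP (p1 - (2 + s) * p0) 0.
  by nra.
nra.
Qed.

Unset Implicit Arguments. Set Strict Implicit.
Theorem lemma5p4 (R : realType) (n : nat) (psi : qvec R n) :
  (0 < n)%N ->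
  is_state psi ->
  (forall phi : qvec R n, stabilizer phi -> fid phi psi <= fid (@ket0 R n) psi) ->
  (real_complex R (Num.sqrt (2 : R) ^+ n / 2 * (Num.sqrt (3 : R) - 1) * FS psi)
     <= \sum_(x in Sstar n :\: Tsub n) cpsi psi x)%R.
Proof.
case: n psi => [//|m] psi _ _ Hmax.
rewrite sum_main.
have Hk := Hmax _ (@stab_phiS R m false false).
rewrite !fidE inner_ket0 inner_phiS conj_om_ff in Hk.
have H := fun s k => Hmax _ (@stab_phiS R m s k).
have Hff := H false false; have Htf := H true false; have Hft := H false true; have Htt := H true true.
rewrite !fidE !inner_phiS inner_ket0 ?conj_om_ff ?conj_om_tf ?conj_om_ft ?conj_om_tt in Hff Htf Hft Htt.
case E0 : (psi (bzero m.+1)) Hk Hff Htf Hft Htt => [a0 b0].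
case E1 : (psi (e0 m)) => [a1 b1].
rewrite /al /= => Hk Hff Htf Hft Htt.
set r := (Num.sqrt (2 : R))^-1 in Hk Hff Htf Hft Htt.
have Hr : r * r = 2^-1.
  by rewrite /r -invfM -expr2 sqr_sqrtr ?ler0n.
have Hsq : forall u v : R, (r * u - 0 * v) ^+ 2 + (r * v + 0 * u) ^+ 2 = (u ^+ 2 + v ^+ 2) / 2.
  move=> u v; rewrite !mul0r subr0 addr0.
  transitivity ((r * r) * (u ^+ 2 + v ^+ 2)); first by ring.
  by rewrite Hr mulrC.
rewrite !Hsq in Hk Hff Htf Hft Htt.
set p0 := a0 ^+ 2 + b0 ^+ 2 in Hk Hff Htf Hft Htt *.
have hFS : FS psi <= p0.
  apply: ge_sup.
    by exists (fid (@phiS R m false false) psi); exists (@phiS R m false false); split => //; exact: stab_phiS.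
  move=> y [phi [Hs ->]]; have := Hmax _ Hs; rewrite [X in _ <= X]fidE inner_ket0 E0. by [].
have hs3 : Num.sqrt (3 : R) * Num.sqrt 3 = 3 by rewrite -expr2 sqr_sqrtr ?ler0n.
have hK := @key R p0 (a1 ^+ 2 + b1 ^+ 2) (a0 * a1 + b0 * b1) (a0 * b1 - b0 * a1) (Num.sqrt 3).
rewrite /p0 !(mul1r, mul0r, mulN1r, subr0, addr0, add0r, sub0r, opprK) in Hk Hff Htf Hft Htt.
have i1 : a1 ^+ 2 + b1 ^+ 2 + 2 * (a0 * a1 + b0 * b1) <= p0 by rewrite /p0; nra.
have i2 : a1 ^+ 2 + b1 ^+ 2 - 2 * (a0 * a1 + b0 * b1) <= p0 by rewrite /p0; nra.
have i3 : a1 ^+ 2 + b1 ^+ 2 + 2 * (a0 * b1 - b0 * a1) <= p0 by rewrite /p0; nra.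
have i4 : a1 ^+ 2 + b1 ^+ 2 - 2 * (a0 * b1 - b0 * a1) <= p0 by rewrite /p0; nra.
have hK' : a1 ^+ 2 + b1 ^+ 2 <= (2 - Num.sqrt 3) * p0.
  by apply: hK => //; [nra | exact: sqrtr_ge0 | rewrite /p0; ring].
have -> : ((a0 -i* b0)%C * (a0 +i* b0)%C - (a1 -i* b1)%C * (a1 +i* b1)%C) =
    real_complex R (p0 - (a1 ^+ 2 + b1 ^+ 2)).
  by apply/eqP; rewrite eq_complex /= /p0; apply/andP; split; apply/eqP; ring.
have -> : (2 : R[i]) ^+ m = real_complex R (2 ^+ m).
  by rewrite rmorphXn (rmorph_nat (real_complex R) 2).
rewrite -!rmorphM lecR.
set t := Num.sqrt (2 : R) ^+ m.+1.
have tpos : 0 < t by rewrite /t exprn_gt0 // sqrtr_gt0 ltr0n.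
have tt : 2 ^+ m = t * t / 2.
  rewrite /t -expr2 exprAC sqr_sqrtr ?ler0n // exprS. rewrite [2 * _]mulrC mulfK //.
  by rewrite pnatr_eq0.
rewrite tt !mulrA mulVf ?gt_eqF // mul1r -!mulrA ler_wpM2l ?(ltW tpos) //.
rewrite ler_wpM2l ?invr_ge0 ?ler0n //.
have hs0 : 0 <= Num.sqrt (3 : R) by exact: sqrtr_ge0.
have hs1 : 1 <= Num.sqrt (3 : R) by nra.
have hFS0 : 0 <= Num.sqrt (3 : R) - 1 by lra.
nra.
Qed.
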